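(* Let $n\ge 2$ and let $f\colon Br_2^n\to Br_d^n$ be the homomorphism defined on generators by $f(\sigma_{i,0})=\sigma_i$ and $f(\sigma_{i,1})=\gamma_i\sigma_i\gamma_{i+1}$ for $i=1,\dots,n-1$. If $\Gamma_1,\Gamma_2\in Br_2^n$ satisfy $f(\Gamma_1)=f(\Gamma_2)$ in $Br_d^n$ (i.e. they are equal as dotted braids), then $\Gamma_1=\Gamma_2$ in $Br_2^n$.
   Context: $Br_2^n$ (the $\mathbb{Z}_2$-braid group) is the group with generators $\sigma_{i,0},\sigma_{i,1}$, $i=1,\dots,n-1$, and relations $\sigma_{i,\varepsilon}\sigma_{j,\eta}=\sigma_{j,\eta}\sigma_{i,\varepsilon}$ for all $|i-j|\ge 2$ and all $\varepsilon,\eta\in\{0,1\}$, and $\sigma_{i,\varepsilon}\sigma_{i+1,\eta}\sigma_{i,\xi}=\sigma_{i+1,\xi}\sigma_{i,\eta}\sigma_{i+1,\varepsilon}$ for $1\le i\le n-2$ and all $\varepsilon,\eta,\xi\in\{0,1\}$ with $\varepsilon+\eta+\xi\equiv 0\pmod 2$. The dotted braid group $Br_d^n$ is the group with generators $\sigma_1,\dots,\sigma_{n-1}$, $\gamma_1,\dots,\gamma_n$ and relations: $\sigma_i\sigma_j=\sigma_j\sigma_i$ for $|i-j|\ge2$; $\sigma_i\sigma_{i+1}\sigma_i=\sigma_{i+1}\sigma_i\sigma_{i+1}$ for $1\le i\le n-2$; $\gamma_i^2=e$ for $i=1,\dots,n$; $\gamma_i\gamma_j=\gamma_j\gamma_i$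 for all $i,j$; and $\gamma_i\gamma_{i+1}\sigma_i\gamma_i\gamma_{i+1}=\sigma_i$ for $i=1,\dots,n-2$. (The paper asserts that $f$ is a well-defined homomorphism.) *)

(* Defs.v *)
From mathcomp Require Import all_boot.
Set Implicit Arguments.
Unset Strict Implicit.
Unset Printing Implicit Defensive.

(* A letter (x, b) stands for x if b = false and for x^{-1} if b = true. *)
Definition word (X : Type) := seq (X * bool).

Definition inv_word (X : Type) (u : word X) : word X :=
  rev (map (fun p => (p.1, ~~ p.2)) u).

Inductive pres_eq (X : Type) (R : word X -> word X -> Prop)
  : word X -> word X -> Prop :=
| pe_refl u : pres_eq R u u
| pe_sym u v : pres_eq R u v -> pres_eq R v u
| pe_trans u v w : pres_eq R u v -> pres_eq R v w -> pres_eq R u w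
| pe_cat u u' v v' : pres_eq R u u' -> pres_eq R v v' ->
    pres_eq R (u ++ v) (u' ++ v')
| pe_free x b : pres_eq R [:: (x, b); (x, ~~ b)] [::]
| pe_rel u v : R u v -> pres_eq R u v.

(* Generator sigma_{i,e} (e = false <-> epsilon = 0), 1 <= i <= n-1. *)
Definition gen2 (n : nat) := {p : nat * bool | (0 < p.1 < n)%N}.

Definition s2 (n i : nat) (e : bool) (H : (0 < (i, e).1 < n)%N) : gen2 n :=
  exist _ (i, e) H.

Definition pos (X : Type) (x : X) : X * bool := (x, false).

Definition rel2 (n : nat) (u v : word (gen2 n)) : Prop :=
  (exists (i j : nat) (e h : bool) (Hi : (0 < (i, e).1 < n)%N)
          (Hj : (0 < (j, h).1 < n)%N),
     (i + 2 <= j \/ j + 2 <= i)%N /\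
     u = [:: pos (s2 Hi); pos (s2 Hj)] /\
     v = [:: pos (s2 Hj); pos (s2 Hi)])
  \/
  (exists (i : nat) (e h x : bool)
          (Hie : (0 < (i, e).1 < n)%N) (Hjh : (0 < (i.+1, h).1 < n)%N)
          (Hix : (0 < (i, x).1 < n)%N) (Hjx : (0 < (i.+1, x).1 < n)%N)
          (Hih : (0 < (i, h).1 < n)%N) (Hje : (0 < (i.+1, e).1 < n)%N),
     ~~ (e (+) h (+) x) /\
     u = [:: pos (s2 Hie); pos (s2 Hjh); pos (s2 Hix)] /\
     v = [:: pos (s2 Hjx); pos (s2 Hih); pos (s2 Hje)]).

Definition br2_eq (n : nat) := pres_eq (@rel2 n).

Inductive dgen_raw := DSig of nat | DGam of nat.

Definition dvalid (n : nat) (g : dgen_raw) : bool :=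
  match g with
  | DSig i => (0 < i < n)%N
  | DGam i => (0 < i <= n)%N
  end.

Definition gend (n : nat) := {g : dgen_raw | dvalid n g}.

Definition dsig (n i : nat) (H : dvalid n (DSig i)) : gend n := exist (fun g => dvalid n g) _ H.
Definition dgam (n i : nat) (H : dvalid n (DGam i)) : gend n := exist (fun g => dvalid n g) _ H.

Definition reld (n : nat) (u v : word (gend n)) : Prop :=
  (exists (i j : nat) (Hi : dvalid n (DSig i)) (Hj : dvalid n (DSig j)),
     (i + 2 <= j \/ j + 2 <= i)%N /\
     u = [:: pos (dsig Hi); pos (dsig Hj)] /\
     v = [:: pos (dsig Hj); pos (dsig Hi)])
  \/
  (exists (i : nat) (Hi : dvalid n (DSig i)) (Hj : dvalid n (DSig i.+1)),
     u = [:: pos (dsig Hi); pos (dsig Hj); pos (dsig Hi)] /\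
     v = [:: pos (dsig Hj); pos (dsig Hi); pos (dsig Hj)])
  \/
  (exists (i : nat) (Hi : dvalid n (DGam i)),
     u = [:: pos (dgam Hi); pos (dgam Hi)] /\ v = [::])
  \/
  (exists (i j : nat) (Hi : dvalid n (DGam i)) (Hj : dvalid n (DGam j)),
     u = [:: pos (dgam Hi); pos (dgam Hj)] /\
     v = [:: pos (dgam Hj); pos (dgam Hi)])
  \/
  (exists (i : nat) (Hs : dvalid n (DSig i)) (Hg : dvalid n (DGam i))
          (Hg' : dvalid n (DGam i.+1)),
     (i <= n - 2)%N /\
     u = [:: pos (dgam Hg); pos (dgam Hg'); pos (dsig Hs);
             pos (dgam Hg); pos (dgam Hg')] /\
     v = [:: pos (dsig Hs)]).

Definition brd_eq (n : nat) := pres_eq (@reld n).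

Lemma f_sig_ok n i : (0 < i < n)%N -> dvalid n (DSig i).
Proof. by []. Qed.

Lemma f_gam_ok n i : (0 < i < n)%N -> dvalid n (DGam i).
Proof. by rewrite /dvalid => /andP[-> /ltnW]. Qed.

Lemma f_gam1_ok n i : (0 < i < n)%N -> dvalid n (DGam i.+1).
Proof. by rewrite /dvalid => /andP[_ ->]. Qed.

Definition f_gen (n : nat) (g : gen2 n) : word (gend n) :=
  let H := svalP g in
  if (sval g).2
  then [:: pos (dgam (f_gam_ok H)); pos (dsig (f_sig_ok H));
          pos (dgam (f_gam1_ok H))]
  else [:: pos (dsig (f_sig_ok H))].

Definition f_word (n : nat) (w : word (gen2 n)) : word (gend n) :=
  flatten (map (fun p => if p.2 then inv_word (f_gen p.1) else f_gen p.1) w).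

(* Main.v *)
Require Import Defs.
From mathcomp Require Import all_boot zify.
From Stdlib Require Import FunctionalExtensionality.
Set Implicit Arguments. Unset Strict Implicit.

Definition swap (i : nat) (c : nat -> bool) : nat -> bool :=
  fun k => if k == i then c i.+1 else if k == i.+1 then c i else c k.
Definition flip (j : nat) (c : nat -> bool) : nat -> bool :=
  fun k => if k == j then ~~ c k else c k.

Definition st n := (word (gen2 n) * (nat -> bool))%type.

Definition act_letter n (p : gend n * bool) (s : st n) : st n :=
  let: (g, b) := p in
  match g with exist x H =>
    match x return dvalid n x -> st n with
    | DSig i => fun H =>
        (s.1 ++ [:: (@exist _ (fun p => (0 < p.1 < n)%N) (i, s.2 i (+) s.2 i.+1) H, b)],
         swap i s.2)
    | DGam j => fun _ => (s.1, flip j s.2)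
    end H
  end.

Definition actw n (u : word (gend n)) (s : st n) : st n :=
  foldl (fun s p => act_letter p s) s u.

Definition sim n (s t : st n) := br2_eq s.1 t.1 /\ s.2 = t.2.

Lemma actw_cat n (u v : word (gend n)) s : actw (u ++ v) s = actw v (actw u s).
Proof. by rewrite /actw foldl_cat. Qed.

Lemma act_letter_sim n p (s t : st n) : sim s t -> sim (act_letter p s) (act_letter p t).
Proof.
case: s t => w c [w' c'] [/= Hw <-]; case: p => [[[i|j] H] b] /=; split => //.
  by apply: pe_cat => //; apply: pe_refl.
Qed.

Lemma actw_sim n u (s t : st n) : sim s t -> sim (actw u s) (actw u t).
Proof. elim: u s t => [|p u IH] s t //= H; apply: IH; exact: act_letter_sim. Qed.

Lemma sim_refl n (s : st n) : sim s s. Proof. split => //; exact: pe_refl. Qed.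
Lemma sim_sym n (s t : st n) : sim s t -> sim t s.
Proof. by case=> H1 H2; split; [apply: pe_sym|]. Qed.
Lemma sim_trans n (s t r : st n) : sim s t -> sim t r -> sim s r.
Proof. by case=> H1 H2 [H3 H4]; split; [apply: pe_trans H3|rewrite H2]. Qed.

Lemma nSn i : (i.+1 == i) = false. Proof. apply/eqP; lia. Qed.
Lemma nnS i : (i == i.+1) = false. Proof. apply/eqP; lia. Qed.
Lemma nSSn i : (i.+2 == i) = false. Proof. apply/eqP; lia. Qed.
Lemma nnSS i : (i == i.+2) = false. Proof. apply/eqP; lia. Qed.


Ltac fsimp := rewrite /swap /flip /= ?eqxx ?nSn ?nnS ?nSSn ?nnSS /=.

Ltac funcase k := apply: functional_extensionality => k; rewrite /swap /flip;
  repeat (case: eqP => [->|?]); rewrite /= ?eqxx ?nSn ?nnS ?nSSn ?nnSS //=.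

Lemma swap_swap i c : swap i (swap i c) = c.
Proof. funcase k. Qed.
Lemma flip_flip j c : flip j (flip j c) = c.
Proof. funcase k; by rewrite negbK. Qed.
Lemma flipC i j c : flip i (flip j c) = flip j (flip i c).
Proof. funcase k. Qed.

Ltac natcase c := repeat (case: ifP => /eqP ?); try (congr (c _); lia); try lia.
Lemma swapC i j c (Hij : (i + 2 <= j \/ j + 2 <= i)%N) : swap j (swap i c) = swap i (swap j c).
Proof. by apply: functional_extensionality => k; rewrite /swap; natcase c. Qed.
Lemma swapB i c : swap i (swap i.+1 (swap i c)) = swap i.+1 (swap i (swap i.+1 c)).
Proof. by apply: functional_extensionality => k; rewrite /swap; natcase c. Qed.
Lemma swapF i c : flip i.+1 (flip i (swap i (flip i.+1 (flip i c)))) = swap i c.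
Proof. by apply: functional_extensionality => k; rewrite /swap /flip; natcase c. Qed.
Lemma flipbit i c : flip i.+1 (flip i c) i (+) flip i.+1 (flip i c) i.+1 = c i (+) c i.+1.
Proof. by rewrite /flip eqxx nSn nnS eqxx; case: (c i); case: (c i.+1). Qed.

Lemma BE1 i c : swap i c i.+1 = c i.
Proof. by rewrite /swap; natcase c. Qed.
Lemma BE2 i c : swap i c i.+2 = c i.+2.
Proof. by rewrite /swap; natcase c. Qed.
Lemma BE3 i c : swap i.+1 (swap i c) i = c i.+1.
Proof. by rewrite /swap; natcase c. Qed.
Lemma BE4 i c : swap i.+1 (swap i c) i.+1 = c i.+2.
Proof. by rewrite /swap; natcase c. Qed.
Lemma BE5 i c : swap i.+1 c i = c i.
Proof. by rewrite /swap; natcase c. Qed.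
Lemma BE6 i c : swap i.+1 c i.+1 = c i.+2.
Proof. by rewrite /swap; natcase c. Qed.
Lemma BE7 i c : swap i (swap i.+1 c) i.+1 = c i.
Proof. by rewrite /swap; natcase c. Qed.
Lemma BE8 i c : swap i (swap i.+1 c) i.+2 = c i.+1.
Proof. by rewrite /swap; natcase c. Qed.

Lemma rel_ok n (u v : word (gend n)) s : reld u v -> sim (actw u s) (actw v s).
Proof.
case: s => w c.
case=> [[i [j [Hi [Hj [Hij [-> ->]]]]]]|[[i [Hi [Hj [-> ->]]]]|[[i [Hi [-> ->]]]|[[i [j [Hi [Hj [-> ->]]]]]|[i [Hs [Hg [Hg' [Hle [-> ->]]]]]]]]]]; rewrite /actw /=.
- have E1 : swap i c j = c j by rewrite /swap; natcase c.
  have E2 : swap i c j.+1 = c j.+1 by rewrite /swap; natcase c.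
  have E3 : swap j c i = c i by rewrite /swap; natcase c.
  have E4 : swap j c i.+1 = c i.+1 by rewrite /swap; natcase c.
  rewrite E1 E2 E3 E4 swapC //.
  split => //; rewrite -!catA /=; apply: pe_cat; first exact: pe_refl.
  apply: pe_rel; left.
  exists i, j, (c i (+) c i.+1), (c j (+) c j.+1), Hi, Hj.
  split; [exact: Hij| split; reflexivity].
- idtac.
  rewrite BE1 BE2 BE3 BE4 BE5 BE6 BE7 BE8 swapB.
  split => //; rewrite -!catA /=; apply: pe_cat; first exact: pe_refl.
  apply: pe_rel; right.
  exists i, (c i (+) c i.+1), (c i (+) c i.+2), (c i.+1 (+) c i.+2), Hi, Hj, Hi, Hj, Hi, Hj.
  split; first by case: (c i); case: (c i.+1); case: (c i.+2).
  split; reflexivity.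
- by rewrite flip_flip; apply: sim_refl.
- by rewrite flipC; apply: sim_refl.
- rewrite flipbit swapF; exact: sim_refl.
Qed.

Lemma BE0 i c : swap i c i = c i.+1.
Proof. by rewrite /swap eqxx. Qed.

Lemma free_ok n (x : gend n) b (s : st n) : sim (actw [:: (x, b); (x, ~~ b)] s) (actw [::] s).
Proof.
case: s => w c; case: x => [[i|j] H]; rewrite /actw /=.
- rewrite BE0 BE1 swap_swap addbC; split => //=.
  rewrite -catA /=. apply: pe_trans (_ : br2_eq (w ++ [::]) w); last by rewrite cats0; exact: pe_refl.
  apply: pe_cat; [exact: pe_refl| exact: pe_free].
- rewrite flip_flip; exact: sim_refl.
Qed.

Lemma brd_ok n (u v : word (gend n)) : brd_eq u v -> forall s, sim (actw u s) (actw v s).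
Proof.
elim=> {u v}.
- move=> u s; exact: sim_refl.
- move=> u v _ IH s; exact: sim_sym.
- move=> u v w _ IH1 _ IH2 s; exact: sim_trans (IH1 s) (IH2 s).
- move=> u u' v v' _ IH1 _ IH2 s; rewrite !actw_cat.
  apply: sim_trans (IH2 _) _; exact: actw_sim.
- move=> x b s; exact: free_ok.
- move=> u v H s; exact: rel_ok.
Qed.

Definition zero : nat -> bool := fun _ => false.

Lemma letter_eq n (w : word (gen2 n)) (x y : gen2 n) b (c : nat -> bool) :
  sval x = sval y -> (w ++ [:: (x, b)], c) = (w ++ [:: (y, b)], c).
Proof. by move=> /val_inj ->. Qed.

Lemma fword_act n (G : word (gen2 n)) w : actw (f_word G) (w, zero) = (w ++ G, zero).
Proof.
elim: G w => [|[[[i e] H] b] G IH] w /=; first by rewrite cats0.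
rewrite /f_word /= -/(f_word G) actw_cat.
have -> : actw (if b then inv_word (f_gen (exist (fun p : nat * bool => (0 < p.1 < n)%N) (i, e) H))
    else f_gen (exist (fun p : nat * bool => (0 < p.1 < n)%N) (i, e) H)) (w, zero)
   = (w ++ [:: (exist (fun p : nat * bool => (0 < p.1 < n)%N) (i, e) H, b)], zero).
  case: e H => H; case: b; rewrite /f_gen /inv_word /actw /=.
  1-4: match goal with |- (?a, ?c) = (?b, ?d) =>
     have -> : c = d by apply: functional_extensionality => k; rewrite /swap /flip /zero; repeat (case: ifP => /eqP ?); try lia; done end.
  1-4: apply: letter_eq; rewrite /= /flip /swap /zero; repeat (case: ifP => /eqP ?); try lia; done.
by rewrite IH -catA.
Qed.

Theorem theorem3 (n : nat) (Hn : (2 <= n)%N) (G1 G2 : word (gen2 n)) :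
  brd_eq (f_word G1) (f_word G2) -> br2_eq G1 G2.
Proof.
move=> H; have [/= H1 _] := brd_ok H ([::], zero).
by rewrite !fword_act /= in H1.
Qed.
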